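(* Let $L$ be a finite semidistributive extremal lattice with $|L|>1$. Then the order dimension of $L$ equals the chromatic number of the complement $\overline{G(L)}$ of its Galois graph.
   Context: A lattice is semidistributive if $x\vee y=x\vee z$ implies $x\vee(y\wedge z)=x\vee y$ and $x\wedge y=x\wedge z$ implies $x\wedge(y\vee z)=x\wedge y$. $L$ is extremal if its length $n$ (maximum number of elements of a chain minus one) equals both the number of join-irreducible elements and the number of meet-irreducible elements. For extremal $L$, choosing a chain $\hat0=x_0\lessdot\dots\lessdot x_n=\hat1$ of length $n$ gives numberings $j_1,\dots,j_n$ of the join-irreducibles and $m_1,\dots,m_n$ of the meet-irreducibles with $x_i=j_1\vee\dots\vee j_i=m_{i+1}\wedge\dots\wedge m_n$. The Galois graph $G(L)$ is the directed graph on the join-irreducibles with an edge $j_i\to j_k$ whenever $i\ne k$ and $j_i\not\le m_k$. Its complement $\overline{G(L)}$ is the simple undirected graph on the same vertices with an edge between two vertices iff there is no directed edge between them in either direction. The order dimension of a poset $P$ is the least $d$ such that $P$ is isomorphic to a subposet of $\mathbb R^d$ with the componentwise order. *)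

(* Defs.v *)
From Stdlib Require Import Rdefinitions Raxioms RIneq.
From HB Require Import structures.
From mathcomp Require Import all_boot all_order.
From mathcomp Require Import boolp.

Set Implicit Arguments.
Unset Strict Implicit.
Unset Printing Implicit Defensive.

Import Order.TTheory.
Local Open Scope order_scope.

Section LatticeDefs.
Context {disp : Order.disp_t} {L : finTBLatticeType disp}.

Definition join_irreducible (j : L) : bool :=
  (j != \bot) && [forall x : L, forall y : L, (j == x `|` y) ==> (j == x) || (j == y)].

Definition meet_irreducible (m : L) : bool :=
  (m != \top) && [forall x : L, forall y : L, (m == x `&` y) ==> (m == x) || (m == y)].

Definition is_chain (C : {set L}) : bool :=
  [forall x in C, forall y in C, (x <= y) || (y <= x)].

Definition lattice_length : nat := (\max_(C : {set L} | is_chain C) #|C|).-1.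

Definition semidistributive : Prop :=
  (forall x y z : L, x `|` y = x `|` z -> x `|` (y `&` z) = x `|` y) /\
  (forall x y z : L, x `&` y = x `&` z -> x `&` (y `|` z) = x `&` y).

Definition extremal : Prop :=
  lattice_length = #|[set j : L | join_irreducible j]| /\
  lattice_length = #|[set m : L | meet_irreducible m]|.

Definition covers (a b : L) : bool :=
  (a < b) && [forall z : L, ~~ ((a < z) && (z < b))].

(* The data obtained from a chain  \hat0 = x_0 <. x_1 <. ... <. x_n = \hat1
   of length n: numberings j_1..j_n (here j 0 .. j (n-1)) of the
   join-irreducibles and m_1..m_n (here m 0 .. m (n-1)) of the
   meet-irreducibles with x_i = j_1 \/ ... \/ j_i = m_{i+1} /\ ... /\ m_n. *)
Definition galois_numbering (n : nat) (x : nat -> L) (j m : 'I_n -> L) : Prop :=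
  [/\ x 0%N = \bot /\ x n = \top,
      (forall i : nat, (i < n)%N -> covers (x i) (x i.+1)),
      ((forall k : 'I_n, join_irreducible (j k)) /\ injective j),
      ((forall k : 'I_n, meet_irreducible (m k)) /\ injective m) &
      (forall i : nat, (i <= n)%N ->
         x i = \join_(k < n | (k < i)%N) j k /\
         x i = \meet_(k < n | (i <= k)%N) m k)].

Definition galois_edge (n : nat) (j m : 'I_n -> L) : rel 'I_n :=
  fun a b => (a != b) && ~~ (j a <= m b).

Definition galois_complement (n : nat) (j m : 'I_n -> L) : rel 'I_n :=
  fun a b => (a != b) && ~~ galois_edge j m a b && ~~ galois_edge j m b a.

End LatticeDefs.

Definition colorable (V : finType) (adj : rel V) (k : nat) : bool :=
  [exists f : {ffun V -> 'I_k},
     [forall u, forall v, ((u != v) && adj u v) ==> (f u != f v)]].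

Lemma colorable_exists (V : finType) (adj : rel V) : exists k, colorable adj k.
Proof.
exists #|V|; apply/existsP; exists [ffun v => enum_rank v].
apply/forallP => u; apply/forallP => v; apply/implyP => /andP [uv _].
rewrite !ffunE; apply: contra uv => /eqP /enum_rank_inj ->; exact: eqxx.
Qed.

Definition chromatic_number (V : finType) (adj : rel V) : nat :=
  ex_minn (colorable_exists adj).

Definition embeds_in_Rd (d0 : Order.disp_t) (P : porderType d0) (d : nat) : Prop :=
  exists f : P -> 'I_d -> R,
    forall x y : P, (x <= y) <-> (forall i : 'I_d, Rle (f x i) (f y i)).

Lemma embeds_exists (d0 : Order.disp_t) (P : finPOrderType d0) :
  exists d, `[< embeds_in_Rd P d >].
Proof.
exists #|P|; apply/asboolP.
exists (fun x i => if (enum_val i <= x) then R1 else R0) => x y; split.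
- move=> xy i; case: ifP => hx.
  + by rewrite (le_trans hx xy); apply: Rle_refl.
  + by case: ifP => _; [apply: Rle_0_1 | apply: Rle_refl].
- move=> /(_ (enum_rank x)); rewrite enum_rankK lexx; case: ifP => // _ H.
  exfalso; exact: (Rlt_not_le _ _ Rlt_0_1 H).
Qed.

Definition order_dim (d0 : Order.disp_t) (P : finPOrderType d0) : nat :=
  ex_minn (embeds_exists P).

(* Main.v *)
Require Import Defs.
From HB Require Import structures.
From mathcomp Require Import all_boot all_order.
From mathcomp Require Import boolp.
From Stdlib Require Import Rdefinitions Raxioms RIneq Lra Classical.
Set Implicit Arguments. Unset Strict Implicit. Unset Printing Implicit Defensive.
Import Order.TTheory.
Local Open Scope order_scope.

Section Lat.
Context {disp : Order.disp_t} {L : finTBLatticeType disp}.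
Implicit Types (u v w y z : L).

Definition lowerc w : L := \join_(v | v < w) v.

Lemma lowerc_le w : lowerc w <= w.
Proof. by apply/joinsP => v /ltW. Qed.

Lemma lt_lowerc v w : v < w -> v <= lowerc w.
Proof. by move=> vw; apply: (joins_sup (fun v => v)). Qed.

Lemma JIP w : join_irreducible w -> w != \bot /\
  (forall u v, w = u `|` v -> w = u \/ w = v).
Proof.
case/andP=> nb /forallP H; split=> // u v E.
move: (H u) => /forallP /(_ v) /implyP; rewrite E eqxx => /(_ isT).
by case/orP => /eqP ->; [left|right].
Qed.

Lemma lowerc_lt w : join_irreducible w -> lowerc w < w.
Proof.
case/JIP => nb Hw; rewrite /lowerc.
apply: (big_ind (fun x => x < w)).
- by rewrite lt_neqAle eq_sym nb le0x.
- move=> a b aw bw; rewrite lt_neqAle leUx (ltW aw) (ltW bw) !andbT.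
  apply/eqP => E; case: (Hw a b (esym E)) => E'.
    by move: aw; rewrite -E' ltxx.
  by move: bw; rewrite -E' ltxx.
- by [].
Qed.

Lemma below_lowerc w v : join_irreducible w -> v <= w -> v != w -> v <= lowerc w.
Proof. by move=> _ vw nvw; apply: lt_lowerc; rewrite lt_neqAle nvw. Qed.

Definition kappa w : L := \join_(v | v `&` w == lowerc w) v.

Lemma kappa_max v w : v `&` w = lowerc w -> v <= kappa w.
Proof. by move=> E; apply: (joins_sup (fun v => v)); rewrite /= E. Qed.

Hypothesis SD : semidistributive (L := L).

Lemma kappa_meet w : join_irreducible w -> kappa w `&` w = lowerc w.
Proof.
move=> Jw.
have lw : lowerc w `&` w = lowerc w by apply/meet_idPl; exact: lowerc_le.
have H : (kappa w `|` lowerc w) `&` w = lowerc w.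
  rewrite /kappa.
  apply: (big_rec (fun x => (x `|` lowerc w) `&` w = lowerc w)).
    by rewrite join0x.
  move=> v x /eqP Ev Hx.
  have Ev' : (v `|` lowerc w) `&` w = lowerc w.
    have -> : v `|` lowerc w = v.
      by apply/join_idPl; rewrite -Ev leIl.
    by [].
  have -> : v `|` x `|` lowerc w = (v `|` lowerc w) `|` (x `|` lowerc w).
    by rewrite joinACA joinxx.
  have := SD.2 w (v `|` lowerc w) (x `|` lowerc w).
  by rewrite !(meetC w) Ev' Hx => /(_ erefl).
suff -> : kappa w = kappa w `|` lowerc w by [].
by apply/esym/join_idPl/kappa_max.
Qed.

Lemma kappa_nle w : join_irreducible w -> ~~ (w <= kappa w).
Proof.
move=> Jw; apply/negP => H.
have := kappa_meet Jw; rewrite (meet_idPr H) => E.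
by move: (lowerc_lt Jw); rewrite -E ltxx.
Qed.

Lemma meet_cases u w : join_irreducible w -> lowerc w <= u ->
  u `&` w = lowerc w \/ w <= u.
Proof.
move=> Jw lu.
have [/eqP E|NE] := boolP (u `&` w == w).
  by right; rewrite -E leIl.
left; apply/eqP; rewrite eq_le.
rewrite below_lowerc ?leIr //=.
by rewrite lexI lu lowerc_le.
Qed.

Lemma kappa_MI w : join_irreducible w -> meet_irreducible (kappa w).
Proof.
move=> Jw; apply/andP; split.
  apply/eqP => E; have := kappa_meet Jw; rewrite E meet1x => E'.
  by move: (lowerc_lt Jw); rewrite -E' ltxx.
apply/forallP => u; apply/forallP => v; apply/implyP => /eqP E.
apply/negPn/negP; rewrite negb_or => /andP [nu nv].
have lk : lowerc w <= kappa w by rewrite -(kappa_meet Jw) leIl.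
have ku : kappa w <= u by rewrite E leIl.
have kv : kappa w <= v by rewrite E leIr.
have wu : w <= u.
  case: (meet_cases Jw (le_trans lk ku)) => // /kappa_max uk.
  by move: nu; rewrite eq_le ku uk.
have wv : w <= v.
  case: (meet_cases Jw (le_trans lk kv)) => // /kappa_max vk.
  by move: nv; rewrite eq_le kv vk.
by move: (kappa_nle Jw); rewrite E lexI wu wv.
Qed.

Lemma kappa_inj w w' : join_irreducible w -> join_irreducible w' ->
  kappa w = kappa w' -> w = w'.
Proof.
move=> Jw Jw' E.
have key : forall a b, join_irreducible a -> join_irreducible b ->
    kappa a = kappa b -> b <= a `|` kappa a.
  move=> a b Ja Jb Eab.
  have lb : lowerc b <= a `|` kappa a.
    by rewrite Eab -(kappa_meet Jb); apply: le_trans (leIl _ _) _; rewrite leUr.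
  case: (meet_cases Jb lb) => // /kappa_max.
  rewrite -Eab => H.
  have : a <= kappa a by apply: le_trans H; rewrite leUl.
  by rewrite (negbTE (kappa_nle Ja)).
have E1 : w `|` kappa w = w' `|` kappa w.
  have h1 := key w w' Jw Jw' E.
  have h2 := key w' w Jw' Jw (esym E).
  rewrite -E in h2.
  apply/eqP; rewrite eq_le !leUx h1 h2 !leUr.
  by [].
have := SD.1 (kappa w) w w'; rewrite !(joinC (kappa w)) E1 => /(_ erefl) E2.
have step : forall a b, join_irreducible a -> join_irreducible b -> kappa a = kappa b ->
   b `|` kappa a = (a `&` b) `|` kappa a -> a <= b.
  move=> a b Ja Jb Eab Eq.
  apply/negPn/negP => nab.
  have : a `&` b <= lowerc a.
    apply: below_lowerc => //; first by rewrite leIl.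
    apply: contra nab => /eqP <-; exact: leIr.
  move=> H.
  have lk : lowerc a <= kappa a by rewrite -(kappa_meet Ja) leIl.
  have : (a `&` b) `|` kappa a = kappa a by apply/join_idPr/(le_trans H lk).
  move=> E3; rewrite E3 in Eq.
  have bk : b <= kappa a by rewrite -Eq leUl.
  by move: (kappa_nle Jb); rewrite -Eab bk.
apply/le_anti/andP; split; apply: step => //;
  first [by rewrite E2 | by rewrite -E meetC E2 E1 | by rewrite E | idtac].
Qed.

Lemma minimal_exists y z : ~~ (y <= z) -> exists w, [/\ w <= y, ~~ (w <= z) &
  forall v, v < w -> v <= z].
Proof.
move=> nyz.
suff H : forall k w, leq #|[set v | v < w]| k -> w <= y -> ~~ (w <= z) ->
  exists w, [/\ w <= y, ~~ (w <= z) & forall v, v < w -> v <= z].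
  exact: (H _ y (leqnn _) (lexx y) nyz).
elim=> [|k IH] w.
  rewrite leqn0 cards_eq0 => /eqP E wy nwz; exists w; split=> // v vw.
  have : v \in [set v | v < w] by rewrite inE.
  by rewrite E inE.
move=> cw wy nwz.
case: (pickP (fun v => (v < w) && ~~ (v <= z))) => [v /andP [vw nvz]|].
  apply: (IH v) => //; last exact: le_trans (ltW vw) wy.
  have : [set u | u < v] \proper [set u | u < w].
    apply/properP; split.
      by apply/subsetP => u; rewrite !inE => uv; apply: lt_trans uv vw.
    by exists v; rewrite !inE ?ltxx.
  move/proper_card => lt; rewrite -ltnS; exact: leq_trans lt cw.
move=> H; exists w; split=> // v vw.
by move: (H v); rewrite vw /= => /negbFE.
Qed.

Lemma F3 y z : ~~ (y <= z) -> exists w, [/\ join_irreducible w, w <= y & z <= kappa w].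
Proof.
move=> /minimal_exists [w [wy nwz H]].
have Jw : join_irreducible w.
  apply/andP; split.
    by apply: contra nwz => /eqP ->; rewrite le0x.
  apply/forallP => a; apply/forallP => b; apply/implyP => /eqP E.
  apply/negPn/negP; rewrite negb_or => /andP [na nb].
  have aw : a < w by rewrite lt_neqAle eq_sym na E leUl.
  have bw : b < w by rewrite lt_neqAle eq_sym nb E leUr.
  by move: nwz; rewrite E leUx (H _ aw) (H _ bw).
exists w; split=> //; apply: kappa_max.
apply/le_anti/andP; split.
  apply: below_lowerc => //; first exact: leIr.
  by apply: contra nwz => /eqP <-; exact: leIl.
rewrite lexI lowerc_le andbT.
by apply/joinsP => v /H.
Qed.

End Lat.

Section Main.
Context {disp : Order.disp_t} {L : finTBLatticeType disp}.
Hypothesis SD : semidistributive (L := L).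
Hypothesis EX : extremal (L := L).
Variables (n : nat) (x : nat -> L) (j m : 'I_n -> L).
Hypothesis Hn : n = lattice_length (L := L).
Hypothesis HG : galois_numbering x j m.

Lemma F2 (a b : 'I_n) : (a < b)%N -> j a <= m b.
Proof.
move=> ab; case: HG => _ _ _ _ H.
have [Hj Hm] := H a.+1 (ltn_ord a).
apply: (@le_trans _ _ (x a.+1)).
  by rewrite Hj; apply: (joins_sup (fun k => j k)) => /=.
by rewrite Hm; apply: (meets_inf (fun k => m k)) => /=.
Qed.

Lemma F1 (a : 'I_n) : ~~ (j a <= m a).
Proof.
apply/negP => jm; case: HG => _ Hc _ _ H.
have [Hj1 _] := H a.+1 (ltn_ord a).
have [_ Hm0] := H a (ltnW (ltn_ord a)).
have := Hc a (ltn_ord a); case/andP => lt _.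
suff : x a.+1 <= x a by move=> /(lt_le_trans lt); rewrite ltxx.
rewrite Hm0; apply/meetsP => b ab.
rewrite Hj1; apply/joinsP => k /= ka.
have [->|ne] := eqVneq b a.
  rewrite ltnS leq_eqVlt in ka; case/orP: ka => [/eqP E|ka].
    by have -> : k = a by apply: val_inj.
  exact: F2.
apply: F2; rewrite ltnS in ka; apply: (leq_ltn_trans ka).
by rewrite ltn_neqAle ab andbT; apply: contra ne => /eqP E; apply/eqP/val_inj.
Qed.

Lemma j_surj w : join_irreducible w -> exists a, j a = w.
Proof.
move=> Jw; case: HG => _ _ [Jj ij] _ _.
have S : [set j a | a in 'I_n] = [set w | join_irreducible w].
  apply/eqP; rewrite eqEcard; apply/andP; split.
    by apply/subsetP => _ /imsetP [a _ ->]; rewrite inE.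
  by rewrite card_imset // card_ord Hn -EX.1.
have : w \in [set j a | a in 'I_n] by rewrite S inE.
by case/imsetP => a _ ->; exists a.
Qed.

Lemma m_surj w : meet_irreducible w -> exists a, m a = w.
Proof.
move=> Jw; case: HG => _ _ _ [Jm im] _.
have S : [set m a | a in 'I_n] = [set w | meet_irreducible w].
  apply/eqP; rewrite eqEcard; apply/andP; split.
    by apply/subsetP => _ /imsetP [a _ ->]; rewrite inE.
  by rewrite card_imset // card_ord Hn -EX.2.
have : w \in [set m a | a in 'I_n] by rewrite S inE.
by case/imsetP => a _ ->; exists a.
Qed.

Lemma kappa_j (a : 'I_n) : kappa (j a) = m a.
Proof.
case: HG => _ _ [Jj ij] _ _.
have [k] := ubnP (val a); elim: k a => // k IH a ak.
have [b Eb] := m_surj (kappa_MI SD (Jj a)).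
have ba : leq b a.
  rewrite leqNgt; apply/negP => /F2; rewrite Eb.
  by rewrite (negbTE (kappa_nle SD (Jj a))).
rewrite leq_eqVlt in ba; case/orP: ba => [/eqP E|ba].
  have E' : b = a by apply: val_inj.
  by rewrite -E' in Eb *; rewrite Eb.
have := IH b (leq_trans ba ak); rewrite Eb => E.
have := kappa_inj SD (Jj b) (Jj a) E => /ij E'.
by move: ba; rewrite E' ltnn.
Qed.

Lemma key_sep y z : ~~ (y <= z) -> exists a : 'I_n, j a <= y /\ z <= m a.
Proof.
case/F3 => w [Jw wy zk].
have [a Ea] := j_surj Jw.
by exists a; rewrite Ea -kappa_j Ea.
Qed.

Lemma lower_bound d : embeds_in_Rd L d -> colorable (galois_complement j m) d.
Proof.
case=> F HF.
have Hex : forall a : 'I_n, exists c, Rlt (F (m a) c) (F (j a) c).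
  move=> a; apply: NNPP => Hne; apply: (negP (F1 a)); apply/HF => c.
  by apply: Rnot_lt_le => Hc; apply: Hne; exists c.
pose col a := proj1_sig (cid (Hex a)).
have Hcol : forall a, Rlt (F (m a) (col a)) (F (j a) (col a)).
  by move=> a; rewrite /col; case: (cid (Hex a)).
apply/existsP; exists [ffun a => col a].
apply/forallP => u; apply/forallP => v; apply/implyP => /andP [uv].
rewrite /galois_complement /galois_edge uv eq_sym uv /= !negbK => /andP [juv jvu].
rewrite !ffunE; apply/eqP => E.
have h1 := (proj1 (HF _ _) juv) (col u).
have h2 := (proj1 (HF _ _) jvu) (col u).
have h3 := Hcol u; have h4 := Hcol v; rewrite -E in h4.
lra.
Qed.

Lemma upper_bound k : colorable (galois_complement j m) k -> embeds_in_Rd L k.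
Proof.
case/existsP => f /forallP Hf.
pose g (c : 'I_k) (y : L) : nat := \max_(a : 'I_n | (f a == c) && (j a <= y)) a.+1.
have gmono : forall c y z, y <= z -> (g c y <= g c z)%N.
  move=> c y z yz; apply/bigmax_leqP => a /andP [fa ja].
  by rewrite /g; apply: leq_bigmax_cond; rewrite fa (le_trans ja yz).
have gj : forall a : 'I_n, (a.+1 <= g (f a) (j a))%N.
  by move=> a; rewrite /g; apply: leq_bigmax_cond; rewrite eqxx lexx.
have gm : forall a : 'I_n, (g (f a) (m a) <= a)%N.
  move=> a; apply/bigmax_leqP => b /andP [/eqP fb jb].
  rewrite ltnNge; apply/negP => ab.
  rewrite leq_eqVlt in ab; case/orP: ab => [/eqP E|ab].
    have E' : a = b by apply: val_inj.
    by move: jb; rewrite -E' (negbTE (F1 a)).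
  have := Hf b; move/forallP/(_ a)/implyP.
  have ne : b != a by apply/eqP => E; move: ab; rewrite E ltnn.
  rewrite fb eqxx ne /= => H.
  have : ~~ galois_complement j m b a by apply/negP => /H.
  rewrite /galois_complement /galois_edge ne eq_sym ne /= (F2 ab) /= jb /=.
  by [].
exists (fun y c => INR (g c y)) => y z; split.
  by move=> yz c; apply: le_INR; apply/ssrnat.leP; apply: gmono.
move=> H; apply/negPn/negP => /key_sep [a [ja za]].
have := H (f a) => /INR_le /ssrnat.leP.
have := leq_trans (gj a) (gmono _ _ _ ja).
have := leq_trans (gmono _ _ _ za) (gm a).
move=> h1 h2 h3.
have := leq_trans h2 h3; rewrite ltnNge h1.
by [].
Qed.

End Main.
Local Close Scope order_scope.

Theorem theorem3p51 (disp : Order.disp_t) (L : finTBLatticeType disp) :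
  semidistributive (L := L) -> extremal (L := L) -> (1 < #|{: L}|)%N ->
  forall (n : nat) (x : nat -> L) (j m : 'I_n -> L),
    n = lattice_length (L := L) ->
    galois_numbering x j m ->
    order_dim L = chromatic_number (galois_complement j m).
Proof.
move=> SD EX _ n x j m Hn HG.
rewrite /order_dim /chromatic_number.
case: ex_minnP => d /asboolP Hd Hdmin.
case: ex_minnP => c Hc Hcmin.
apply/eqP; rewrite eqn_leq; apply/andP; split.
  by apply: Hdmin; apply/asboolP; exact: (upper_bound SD EX Hn HG Hc).
by apply: Hcmin; exact: (lower_bound HG Hd).
Qed.
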